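(* Let $\mathcal G$ be a Petri game with one system player whose underlying net is finite and bounded. If $\mathcal G$ has a winning, deadlock-avoiding strategy, then Player~0 has a winning strategy in the graph game $\mathit{Graph}(\mathcal G)$.
   Context: Petri nets. A Petri net is a tuple $\mathcal N=(\mathcal P,\mathcal T,\mathcal F,\mathit{In})$ where the set of places $\mathcal P$ and the set of transitions $\mathcal T$ are disjoint, the flow relation $\mathcal F$ is a multiset over $(\mathcal P\times\mathcal T)\cup(\mathcal T\times\mathcal P)$, and the initial marking $\mathit{In}$ is a finite multiset over $\mathcal P$. For a node $x$, the precondition ${}^\bullet x$ is the multiset with ${}^\bullet x(y)=\mathcal F(y,x)$ and the postcondition $x^\bullet$ is the multiset with $x^\bullet(y)=\mathcal F(x,y)$; every transition $t$ must satisfy $0<|{}^\bullet t|<\infty$ and $0<|t^\bullet|<\infty$. A marking is a finite multiset over $\mathcal P$. A transition $t$ is enabled in a marking $M$ if ${}^\bullet t\subseteq M$ (multiset inclusion); firing it yields $M'=M-{}^\bullet t+t^\bullet$, written $M\xrightarrow{t}M'$. A marking is reachable if it is obtained from $\mathit{In}$ by firing a finite sequence of transitions; $\mathcal R(\mathcal N)$ denotes the set of reachable markings. $\mathcal N$ is finite if $\mathcal P\cup\mathcal T$ is finite, $k$-bounded ($k\ge1$) if $M(p)\le k$ for all $M\in\mathcal R(\mathcal N)$ and $p\in\mathcal P$, and bounded if it is $k$-bounded for some $k$. For a function $f$ and a multiset $M$, $f[M]$ is the image multiset $f[M](y)=\sum_{x: f(x)=y}M(x)$. Occurrence nets and branching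 processes. Let $<$ be the transitive closure of $\{(x,y)\mid \mathcal F(x,y)>0\}$ and $\le$ its reflexive-transitive closure; the causal past of a node $x$ is $\lfloor x\rfloor=\{y\mid y\le x\}$, and $\lfloor S\rfloor=\bigcup_{x\in S}\lfloor x\rfloor$. Nodes $x,y$ are in conflict, $x\,\sharp\,y$, if there is a place $p\ne x,y$ and distinct transitions $t_1,t_2\in p^\bullet$ with $t_1\le x$ and $t_2\le y$. Nodes are concurrent if they are neither causally related ($x\le y$ or $y\le x$) nor in conflict. An occurrence net is a net in which pre- and postconditions of transitions are sets, every place has at most one incoming transition, $\mathit{In}=\{p\in\mathcal P\mid {}^\bullet p=\emptyset\}$, $\mathcal F^{-1}$ is well-founded, and no transition is in conflict with itself. A cut is a maximal set of pairwise concurrent places. A homomorphism from $\mathcal N_1$ to $\mathcal N_2$ is a map $\lambda:\mathcal P_1\cup\mathcal T_1\to\mathcal P_2\cup\mathcal T_2$ sending places to places and transitions to transitions with $\lambda[{}^\bullet t]={}^\bullet\lambda(t)$ and $\lambda[t^\bullet]=\lambda(t)^\bullet$ for all $t\in\mathcal T_1$; it is initial if $\lambda[\mathit{In}_1]=\mathit{In}_2$. An initial branching process of $\mathcal N$ is a pair $(\mathcal N^U,\lambda)$ with $\mathcal N^U$ an occurrence net and $\lambda$ an initial homomorphism $\mathcal N^U\to\mathcal N$ such that for all $t_1,t_2\in\mathcal T^U$, ${}^\bullet t_1={}^\bullet t_2$ and $\lambda(t_1)=\lambda(t_2)$ imply $t_1=t_2$. Petri games. A Petri game is $\mathcal G=(\mathcal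 P_S,\mathcal P_E,\mathcal T,\mathcal F,\mathit{In},\mathcal B)$ where $\mathcal P_S$ (system places) and $\mathcal P_E$ (environment places) are disjoint, $\mathcal N=(\mathcal P_S\cup\mathcal P_E,\mathcal T,\mathcal F,\mathit{In})$ is a finite Petri net (the underlying net) and $\mathcal B$ is a set of markings (bad markings). A transition $t$ is purely environmental if ${}^\bullet t\subseteq\mathcal P_E$, otherwise it is a system transition. $\mathcal G$ has one system player if every $M\in\mathcal R(\mathcal N)$ contains exactly one token on system places; that place is denoted $s_M$, and $s_M^\bullet$ is the set of transitions having $s_M$ in their precondition. A winning, deadlock-avoiding strategy for $\mathcal G$ is an initial branching process $(\mathcal N^\sigma,\lambda)$ of $\mathcal N$ such that, with $\mathcal P^\sigma_S=\lambda^{-1}(\mathcal P_S)\cap\mathcal P^\sigma$: (justified refusal) for every set $S$ of pairwise concurrent places of $\mathcal N^\sigma$ and every transition $\mathbf t$ of $\mathcal N$ with $\lambda[S]={}^\bullet\mathbf t$ such that no $t\in\mathcal T^\sigma$ has $\lambda(t)=\mathbf t$ and ${}^\bullet t=S$, there is $s\in S\cap\mathcal P^\sigma_S$ such that $\mathbf t\notin\lambda[s^\bullet]$; (safety) $\lambda[M]\notin\mathcal B$ for all $M\in\mathcal R(\mathcal N^\sigma)$; (determinism) for every $s\in\mathcal P^\sigma_S$ and every $M\in\mathcal R(\mathcal N^\sigma)$ containing $s$, at most one $t\in s^\bullet$ is enabled in $M$; (deadlock avoidance) for every $M\in\mathcal R(\mathcal N^\sigma)$, if some transition of $\mathcal N$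 is enabled in $\lambda[M]$ then some transition of $\mathcal N^\sigma$ is enabled in $M$. Graph games. A graph game $(\mathcal V_0,\mathcal V_1,\mathcal I,\mathcal E,\mathcal X)$ has disjoint vertex sets $\mathcal V_0,\mathcal V_1$ (of Players 0 and 1), initial vertex $\mathcal I$, edge relation $\mathcal E$ and bad vertices $\mathcal X$. A play is a maximal (finite or infinite) sequence $v_0v_1\dots$ with $v_0=\mathcal I$ and $(v_i,v_{i+1})\in\mathcal E$; it is won by Player~0 if no $v_i\in\mathcal X$. A strategy for Player~0 is a vertex-labeled tree whose root is labeled $\mathcal I$, where a node labeled with a $\mathcal V_1$ vertex has one child for each successor vertex and a node labeled with a $\mathcal V_0$ vertex having a successor has exactly one child labeled with one successor; it is winning if all maximal paths are labeled with plays won by Player~0. The game $\mathit{Graph}(\mathcal G)$: $\mathcal V_0=\{(M,\top)\mid M\in\mathcal R(\mathcal N)\}$, $\mathcal V_1=\{(M,c)\mid M\in\mathcal R(\mathcal N),\,c\subseteq s_M^\bullet\}$, $\mathcal I=(\mathit{In},\top)$. Edges: (E1) $(M,\top)\to(M,c)$ for every $c\subseteq s_M^\bullet$; (E2) $(M,c)\to(M',c)$ whenever some purely environmental $\mathbf t$ satisfies $M\xrightarrow{\mathbf t}M'$; (E3) $(M,c)\to(M',\top)$ whenever some system transition $\mathbf t\in c$ satisfies $M\xrightarrow{\mathbf t}M'$. Bad vertices: all $(M,c)\in\mathcal V_1$ such that (X1) $M\in\mathcal B$; or (X2a) two distinct transitions of $c$ are enabled in $M$; or (X2b) some $\mathbf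 t\in c$ is enabled in $M$ and $0<{}^\bullet\mathbf t(p)<M(p)$ for some place $p$; or (X3) some transition is enabled in $M$, every transition enabled in $M$ is a system transition, and no transition enabled in $M$ lies in $c$. *)

(* Defs.v *)
From HB Require Import structures.
From mathcomp Require Import all_boot.
From Stdlib Require Import Relation_Operators.
From Stdlib Require List.

Set Implicit Arguments.
Unset Strict Implicit.
Unset Printing Implicit Defensive.

(* General (possibly infinite) Petri nets.  Multisets are functions    *)
(* into nat; the flow relation is given by pre/post multiplicities.    *)

Record net : Type := Net {
  pl : Type;
  tr : Type;
  pre : tr -> pl -> nat;
  post : tr -> pl -> nat;
  init : pl -> nat
}.
Arguments pre : clear implicits.
Arguments post : clear implicits.
Arguments init : clear implicits.

Definition fin_supp (X : Type) (M : X -> nat) : Prop :=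
  exists l : seq X, forall x, 0 < M x -> List.In x l.

Definition is_net (N : net) : Prop :=
  fin_supp (init N) /\
  forall t : tr N,
    fin_supp (pre N t) /\ fin_supp (post N t) /\
    (exists p, 0 < pre N t p) /\ (exists p, 0 < post N t p).

Definition enabled (N : net) (t : tr N) (M : pl N -> nat) : Prop :=
  forall p, pre N t p <= M p.

Definition fires (N : net) (M : pl N -> nat) (t : tr N) (M' : pl N -> nat) : Prop :=
  enabled t M /\ forall p, M' p = M p - pre N t p + post N t p.

Inductive reach (N : net) : (pl N -> nat) -> Prop :=
| reach_init M : (forall p, M p = init N p) -> @reach N M
| reach_step M t M' : @reach N M -> fires M t M' -> @reach N M'.
Arguments reach : clear implicits.

Definition bounded (N : net) : Prop :=
  exists k, 0 < k /\ forall M, reach N M -> forall p, M p <= k.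

Definition node (N : net) : Type := (pl N + tr N)%type.

Definition flowrel (N : net) (x y : node N) : Prop :=
  match x, y with
  | inl p, inr t => 0 < pre N t p
  | inr t, inl p => 0 < post N t p
  | _, _ => False
  end.

Definition causal_le (N : net) : node N -> node N -> Prop :=
  clos_refl_trans (node N) (@flowrel N).

Definition conflict (N : net) (x y : node N) : Prop :=
  exists (p : pl N) (t1 t2 : tr N),
    inl p <> x /\ inl p <> y /\ t1 <> t2 /\
    0 < pre N t1 p /\ 0 < pre N t2 p /\
    causal_le (inr t1) x /\ causal_le (inr t2) y.

Definition concurrent (N : net) (x y : node N) : Prop :=
  ~ causal_le x y /\ ~ causal_le y x /\ ~ conflict x y.

Definition occurrence_net (N : net) : Prop :=
  is_net N /\
  (forall t p, pre N t p <= 1 /\ post N t p <= 1) /\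
  (forall p t1 t2, 0 < post N t1 p -> 0 < post N t2 p -> t1 = t2) /\
  (* In = { p | pre(p) = empty } *)
  (forall p, (init N p = 1 /\ forall t, post N t p = 0) \/
             (init N p = 0 /\ exists t, 0 < post N t p)) /\
  well_founded (@flowrel N) /\
  (forall t : tr N, ~ conflict (inr t) (inr t)).

Definition img_ms (X : Type) (Y : eqType) (f : X -> Y) (M : X -> nat) (N : Y -> nat) : Prop :=
  exists l : seq X, List.NoDup l /\ (forall x, 0 < M x -> List.In x l) /\
    forall y, N y = \sum_(x <- l | f x == y) M x.

Record pgame : Type := PGame {
  gpl : finType;
  gtr : finType;
  sysp : pred gpl;                   (* membership in P_S; P_E = complement *)
  gpre : gtr -> gpl -> nat;
  gpost : gtr -> gpl -> nat;
  ginit : gpl -> nat;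
  gbad : {ffun gpl -> nat} -> Prop
}.
Arguments sysp : clear implicits.

Definition under (G : pgame) : net :=
  @Net (gpl G) (gtr G) (@gpre G) (@gpost G) (@ginit G).

(* the underlying net is a Petri net (finiteness is built in) *)
Definition is_petri_game (G : pgame) : Prop := is_net (under G).

Definition purely_env (G : pgame) (t : gtr G) : Prop :=
  forall p, 0 < gpre t p -> ~~ sysp G p.

Definition system_tr (G : pgame) (t : gtr G) : Prop := ~ purely_env t.

Definition one_system_player (G : pgame) : Prop :=
  forall M, reach (under G) M -> \sum_(p | sysp G p) M p = 1.

Definition sub_sM_post (G : pgame) (M : gpl G -> nat) (c : {set gtr G}) : Prop :=
  forall t, t \in c -> exists s, sysp G s /\ 0 < M s /\ 0 < gpre t s.

Definition branching_process (G : pgame) (U : net)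
    (lP : pl U -> gpl G) (lT : tr U -> gtr G) : Prop :=
  occurrence_net U /\
  (forall t : tr U, img_ms lP (pre U t) (gpre (lT t)) /\
                    img_ms lP (post U t) (gpost (lT t))) /\
  img_ms lP (init U) (@ginit G) /\
  (forall t1 t2 : tr U, (forall p, pre U t1 p = pre U t2 p) ->
                        lT t1 = lT t2 -> t1 = t2).

Definition winning_da_strategy (G : pgame) (U : net)
    (lP : pl U -> gpl G) (lT : tr U -> gtr G) : Prop :=
  branching_process lP lT /\
  (* justified refusal; the set S is a duplicate-free list *)
  (forall (S : seq (pl U)) (t : gtr G),
     List.NoDup S ->
     (forall x y, List.In x S -> List.In y S -> x <> y ->
        concurrent (inl x : node U) (inl y)) ->
     (forall p, gpre t p = \sum_(x <- S | lP x == p) 1) ->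
     ~ (exists t' : tr U, lT t' = t /\
          forall x, (List.In x S -> pre U t' x = 1) /\
                    (~ List.In x S -> pre U t' x = 0)) ->
     exists s, List.In s S /\ sysp G (lP s) /\
       ~ (exists t' : tr U, 0 < pre U t' s /\ lT t' = t)) /\
  (forall M, reach U M -> forall B : {ffun gpl G -> nat},
     img_ms lP M B -> ~ gbad B) /\
  (forall (s : pl U) M, sysp G (lP s) -> reach U M -> 0 < M s ->
     forall t1 t2 : tr U, 0 < pre U t1 s -> 0 < pre U t2 s ->
       enabled t1 M -> enabled t2 M -> t1 = t2) /\
  (forall M, reach U M -> forall LM : gpl G -> nat, img_ms lP M LM ->
     (exists t : gtr G, @enabled (under G) t LM) ->
     exists t' : tr U, enabled t' M).

Definition has_winning_da_strategy (G : pgame) : Prop :=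
  exists (U : net) (lP : pl U -> gpl G) (lT : tr U -> gtr G),
    winning_da_strategy lP lT.

Record ggame : Type := GGame {
  gV : Type;
  gV0 : gV -> Prop;
  gV1 : gV -> Prop;
  gI : gV;
  gE : gV -> gV -> Prop;
  gX : gV -> Prop
}.

Fixpoint epath (A : Type) (E : A -> A -> Prop) (v : A) (l : seq A) : Prop :=
  match l with
  | [::] => True
  | v' :: l' => E v v' /\ epath E v' l'
  end.

Definition finite_play (Gm : ggame) (l : seq (gV Gm)) : Prop :=
  exists l', l = gI Gm :: l' /\ epath (@gE Gm) (gI Gm) l' /\
             forall v, ~ gE (last (gI Gm) l') v.

Definition infinite_play (Gm : ggame) (f : nat -> gV Gm) : Prop :=
  f 0 = gI Gm /\ forall n, gE (f n) (f n.+1).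

(* A strategy tree is represented by the set of label sequences of the
   root-to-node paths (children of a node carry distinct labels, so the
   labelled tree is determined by this set). *)
Definition is_strategy (Gm : ggame) (S : seq (gV Gm) -> Prop) : Prop :=
  S [:: gI Gm] /\
  (forall w, S w -> exists w', w = gI Gm :: w') /\
  (forall w v, S (rcons w v) -> w <> [::] -> S w) /\
  (forall w v, S (rcons w v) -> gV0 v \/ gV1 v) /\
  (forall w v, S (rcons w v) -> gV1 v ->
     forall v', S (rcons (rcons w v) v') <-> gE v v') /\
  (forall w v, S (rcons w v) -> gV0 v -> (exists v', gE v v') ->
     exists v', gE v v' /\ forall v'', S (rcons (rcons w v) v'') <-> v'' = v') /\
  (forall w v, S (rcons w v) -> gV0 v -> (forall v', ~ gE v v') ->
     forall v', ~ S (rcons (rcons w v) v')).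

Definition winning_strategy (Gm : ggame) (S : seq (gV Gm) -> Prop) : Prop :=
  is_strategy S /\
  (forall w, S w -> (forall v, ~ S (rcons w v)) ->
     finite_play w /\ forall v, List.In v w -> ~ gX v) /\
  (forall f : nat -> gV Gm, (forall n, S (mkseq f n.+1)) ->
     infinite_play f /\ forall n, ~ gX (f n)).

Definition player0_wins (Gm : ggame) : Prop :=
  exists S : seq (gV Gm) -> Prop, winning_strategy S.

(* The graph game Graph(G); None encodes the top element.               *)

Definition gvert (G : pgame) : Type := ({ffun gpl G -> nat} * option {set gtr G})%type.

Definition graph_V0 (G : pgame) (v : gvert G) : Prop :=
  match v with
  | (M, None) => reach (under G) M
  | _ => False
  end.

Definition graph_V1 (G : pgame) (v : gvert G) : Prop :=
  match v with
  | (M, Some c) => reach (under G) M /\ sub_sM_post M c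
  | _ => False
  end.

Definition graph_E (G : pgame) (v v' : gvert G) : Prop :=
  match v, v' with
  | (M, None), (M', Some c) =>
      graph_V0 v /\ M' = M /\ sub_sM_post M c
  | (M, Some c), (M', Some c') =>
      graph_V1 v /\ graph_V1 v' /\ c' = c /\
      exists t, purely_env t /\ @fires (under G) M t M'
  | (M, Some c), (M', None) =>
      graph_V1 v /\ graph_V0 v' /\
      exists t, system_tr t /\ t \in c /\ @fires (under G) M t M'
  | _, _ => False
  end.

Definition graph_X (G : pgame) (v : gvert G) : Prop :=
  match v with
  | (M, Some c) =>
      graph_V1 v /\
      ( gbad M
      \/ (exists t1 t2, t1 <> t2 /\ t1 \in c /\ t2 \in c /\
            @enabled (under G) t1 M /\ @enabled (under G) t2 M)
      \/ (exists t p, t \in c /\ @enabled (under G) t M /\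
            0 < gpre t p /\ gpre t p < M p)
      \/ ((exists t, @enabled (under G) t M) /\
          (forall t, @enabled (under G) t M -> system_tr t) /\
          (forall t, @enabled (under G) t M -> t \notin c)))
  | _ => False
  end.

Definition Graph (G : pgame) : ggame :=
  @GGame (gvert G) (@graph_V0 G) (@graph_V1 G)
         ([ffun p => ginit p], None) (@graph_E G) (@graph_X G).

(* Main.v *)
Require Import Defs.
From Stdlib Require Import Relation_Operators Operators_Properties ClassicalEpsilon Classical FunctionalExtensionality.
From Stdlib Require List.
From HB Require Import structures.
From mathcomp Require Import all_boot.

Set Implicit Arguments.
Unset Strict Implicit.
Unset Printing Implicit Defensive.

Definition pb (P : Prop) : bool := if excluded_middle_informative P then true else false.
Lemma pbP P : reflect P (pb P).
Proof. rewrite /pb; case: excluded_middle_informative => h; by constructor. Qed.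

Definition ceq (T : Type) : Type := T.
Definition ceq_op (T : Type) (x y : ceq T) : bool := pb (x = y).
Lemma ceq_opP T : Equality.axiom (@ceq_op T).
Proof. move=> x y; exact: pbP. Qed.
HB.instance Definition _ (T : Type) := hasDecEq.Build (ceq T) (@ceq_opP T).

Section Lists.
Variable X : Type.
Implicit Types l : seq (ceq X).

Lemma InE (x : ceq X) l : List.In x l <-> x \in l.
Proof.
elim: l => [|y l IH] //=; rewrite in_cons; split.
- by case=> [->|/IH ->]; rewrite ?eqxx ?orbT.
- by case/orP => [/eqP ->|/IH]; [left|right].
Qed.

Lemma NoDupE l : List.NoDup l <-> uniq l.
Proof.
elim: l => [|y l IH] /=; first by split => // _; constructor.
split.
- move=> H; inversion H; subst; apply/andP; split; last by apply/IH.
  by apply/negP => /InE.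
- case/andP => Hn Hu; constructor; last by apply/IH.
  by move/InE; apply/negP.
Qed.

Lemma sum_pos_drop l (P : pred (ceq X)) (f : ceq X -> nat) :
  \sum_(x <- l | P x) f x = \sum_(x <- l | (0 < f x) && P x) f x.
Proof.
rewrite big_mkcond [RHS]big_mkcond; apply: eq_bigr => x _.
by case: (P x); case: (f x); rewrite ?andbT ?andbF.
Qed.

Lemma sum_indep l1 l2 (P : pred (ceq X)) (f : ceq X -> nat) :
  uniq l1 -> uniq l2 -> (forall x, 0 < f x -> x \in l1) -> (forall x, 0 < f x -> x \in l2) ->
  \sum_(x <- l1 | P x) f x = \sum_(x <- l2 | P x) f x.
Proof.
move=> u1 u2 c1 c2.
rewrite sum_pos_drop [RHS]sum_pos_drop -!big_filter_cond.
apply: perm_big; apply: uniq_perm; try exact: filter_uniq.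
move=> x; rewrite !mem_filter; case: (ltnP 0 (f x)) => //= h.
by rewrite (c1 _ h) (c2 _ h).
Qed.

Lemma sum_ge l (P : pred (ceq X)) (f : ceq X -> nat) x :
  uniq l -> x \in l -> P x -> f x <= \sum_(y <- l | P y) f y.
Proof.
move=> u xl Px; rewrite big_mkcond (bigD1_seq x) //= Px; exact: leq_addr.
Qed.

Lemma sum_ge2 l (P : pred (ceq X)) (f : ceq X -> nat) x y :
  uniq l -> x \in l -> y \in l -> x != y -> P x -> P y -> f x + f y <= \sum_(z <- l | P z) f z.
Proof.
move=> u xl yl nxy Px Py; rewrite big_mkcond (bigD1_seq x) //= Px leq_add2l.
rewrite -big_filter (bigD1_seq y) /=; last exact: filter_uniq.
  by rewrite Py leq_addr.
by rewrite mem_filter eq_sym nxy.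
Qed.

End Lists.

Section Sel.
Variables (X Y : eqType) (lab : X -> Y).

Fixpoint sel (need : Y -> nat) (l : seq X) : seq X :=
  match l with
  | [::] => [::]
  | x :: r => let need' := fun q => need q - (lab x == q) in
      if 0 < need (lab x) then x :: sel need' r else sel need' r
  end.

Lemma sel_subseq need l : subseq (sel need l) l.
Proof.
elim: l need => [|x l IH] need //=.
case: ifP => _; first by rewrite eqxx.
apply: subseq_trans (IH _) (subseq_cons _ _).
Qed.

Lemma sel_count need l q :
  count (fun z => lab z == q) (sel need l) = minn (need q) (count (fun z => lab z == q) l).
Proof.
elim: l need => [|x l IH] need /=; first by rewrite minn0.
case: ifP => hn /=; rewrite IH; case: (eqVneq (lab x) q) => [<-|hq] /=.
- by rewrite subn1 add1n -(minnSS) prednK.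
- by rewrite !subn0 !add0n.
- by move: hn; rewrite lt0n => /negbFE/eqP ->; rewrite sub0n !min0n.
- by rewrite !subn0 !add0n.
Qed.

Lemma sel_cat need a b :
  sel need (a ++ b) = sel need a ++ sel (fun q => need q - count (fun z => lab z == q) a) b.
Proof.
elim: a need => [|x a IH] need /=.
  by congr sel; apply: functional_extensionality => q; rewrite subn0.
have E : (fun q => need q - ((lab x == q) + count (fun z => lab z == q) a)) =
         (fun q => (need q - (lab x == q)) - count (fun z => lab z == q) a).
  by apply: functional_extensionality => q; rewrite subnDA.
by case: ifP => _; rewrite IH E.
Qed.

End Sel.
Section Img.
Variables (X : Type) (Y : finType) (lab : X -> Y).

Lemma img_any (M : X -> nat) (N : Y -> nat) : img_ms lab M N ->
  forall l : seq (ceq X), uniq l -> (forall x : ceq X, 0 < M x -> x \in l) ->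
  forall y, N y = \sum_(x <- l | lab x == y) M x.
Proof.
case=> l0 [/NoDupE u0 [c0 e0]] l u c y.
rewrite e0; apply: (@sum_indep X l0 l) => // x /c0 /InE //.
Qed.

Lemma img_mk (M : X -> nat) (N : Y -> nat) (l : seq (ceq X)) :
  uniq l -> (forall x : ceq X, 0 < M x -> x \in l) ->
  (forall y, N y = \sum_(x <- l | lab x == y) M x) -> img_ms lab M N.
Proof.
move=> u c e; exists l; split; first by apply/NoDupE.
split=> // x /c /InE //.
Qed.

Lemma img_list (M : X -> nat) (N : Y -> nat) : img_ms lab M N ->
  exists l : seq (ceq X), uniq l /\ forall x : ceq X, 0 < M x -> x \in l.
Proof. case=> l [/NoDupE u [c _]]; exists l; split=> // x /c /InE //. Qed.

Lemma img_le A B NA NB : img_ms lab A NA -> img_ms lab B NB ->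
  (forall x, A x <= B x) -> forall y, NA y <= NB y.
Proof.
move=> hA hB le y.
case: (img_list hA) => lA [uA cA]; case: (img_list hB) => lB [uB cB].
set L : seq (ceq X) := undup (lA ++ lB).
have uL : uniq L by exact: undup_uniq.
have cL1 : forall x : ceq X, 0 < A x -> x \in L by move=> x hx; rewrite /L mem_undup mem_cat cA.
have cL2 : forall x : ceq X, 0 < B x -> x \in L by move=> x hx; rewrite /L mem_undup mem_cat cB ?orbT.
rewrite (img_any hA uL cL1) (img_any hB uL cL2); exact: leq_sum.
Qed.

Lemma img_pos A NA x : img_ms lab A NA -> A x <= NA (lab x).
Proof.
move=> hA; case: (img_list hA) => l [u c].
case: (posnP (A x)) => [->//|h].
rewrite (img_any hA u c); apply: (@sum_ge X l _ A x u (c x h)); exact: eqxx.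
Qed.

Lemma img_pos_inv A NA y : img_ms lab A NA -> 0 < NA y -> exists x, lab x = y /\ 0 < A x.
Proof.
move=> hA; case: (img_list hA) => l [u c]; rewrite (img_any hA u c) => h.
apply: NNPP => hn; move: h; rewrite big1 // => x /eqP hx.
case: (posnP (A x)) => // hp; case: hn; by exists x.
Qed.

Lemma img_ext A NA A' NA' : img_ms lab A NA -> (forall x, A x = A' x) -> (forall y, NA y = NA' y) ->
  img_ms lab A' NA'.
Proof.
move=> hA eA eN; case: (img_list hA) => l [u c].
apply: (img_mk u) => [x|y]; first by rewrite -eA; exact: c.
rewrite -eN (img_any hA u c); apply: eq_bigr => x _; exact: eA.
Qed.

Lemma img_fire K NK P NP Q NQ :
  img_ms lab K NK -> img_ms lab P NP -> img_ms lab Q NQ -> (forall x, P x <= K x) ->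
  img_ms lab (fun x => K x - P x + Q x) (fun y => NK y - NP y + NQ y).
Proof.
move=> hK hP hQ le.
case: (img_list hK) => lK [uK cK]; case: (img_list hP) => lP [uP cP];
case: (img_list hQ) => lQ [uQ cQ].
set L : seq (ceq X) := undup (lK ++ lP ++ lQ).
have uL : uniq L by exact: undup_uniq.
have iL : forall x : ceq X, x \in lK ++ lP ++ lQ -> x \in L by move=> x; rewrite /L mem_undup.
apply: (img_mk uL).
  move=> x; rewrite addn_gt0 subn_gt0 => /orP [h|h]; apply: iL; rewrite !mem_cat.
    by rewrite cK // (leq_ltn_trans _ h).
  by rewrite cQ ?orbT.
move=> y; rewrite big_split /= sumnB // -(img_any hK uL) -?(img_any hP uL) -?(img_any hQ uL) //.
- by move=> x h; apply: iL; rewrite !mem_cat cQ ?orbT.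
- by move=> x h; apply: iL; rewrite !mem_cat cP ?orbT.
- by move=> x h; apply: iL; rewrite !mem_cat cK.
Qed.

Lemma img_sys K NK (S : pred Y) : img_ms lab K NK ->
  forall l : seq (ceq X), uniq l -> (forall x : ceq X, 0 < K x -> x \in l) ->
  \sum_(y | S y) NK y = \sum_(x <- l | S (lab x)) K x.
Proof.
move=> hK l u c.
rewrite (eq_bigr (fun y => \sum_(x <- l | lab x == y) K x)); last by move=> y _; exact: img_any.
rewrite (exchange_big_dep (fun x => S (lab x))) /=; last by move=> y x Sy /eqP hxy; rewrite hxy.
apply: eq_bigr => x Sx.
rewrite (big_pred1 (lab x)) // => y /=; rewrite eq_sym; case: (eqVneq (lab x) y) => [hy|]; by rewrite ?andbF // -hy Sx.
Qed.

End Img.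
Section Occ.
Variable U : net.
Hypothesis HU : occurrence_net U.

Lemma occ_pre1 t p : pre U t p <= 1.
Proof. by case: HU => _ [h _]; case: (h t p). Qed.
Lemma occ_post1 t p : post U t p <= 1.
Proof. by case: HU => _ [h _]; case: (h t p). Qed.
Lemma occ_prod t1 t2 p : 0 < post U t1 p -> 0 < post U t2 p -> t1 = t2.
Proof. by case: HU => _ [_ [h _]]; apply: h. Qed.
Lemma occ_init p : (init U p = 1 /\ forall t, post U t p = 0) \/
                   (init U p = 0 /\ exists t, 0 < post U t p).
Proof. by case: HU => _ [_ [_ [h _]]]. Qed.
Lemma occ_pre_ne t : exists p, 0 < pre U t p.
Proof. by case: HU => [[_ h] _]; case: (h t) => _ [_ [ ]]. Qed.

Definition produced (C : tr U -> Prop) p := init U p = 1 \/ exists t, C t /\ 0 < post U t p.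
Definition marked (C : tr U -> Prop) p :=
  produced C p /\ ~ (exists t, C t /\ 0 < pre U t p).

Record Inv (K : pl U -> nat) (C : tr U -> Prop) : Prop := {
  inv_le1 : forall p, K p <= 1;
  inv_mk : forall p, 0 < K p <-> marked C p;
  inv_cl : forall t p, C t -> 0 < pre U t p -> produced C p;
  inv_uc : forall t1 t2 p, C t1 -> C t2 -> 0 < pre U t1 p -> 0 < pre U t2 p -> t1 = t2 }.

Lemma inv_init : Inv (init U) (fun _ => False).
Proof.
split.
- by move=> p; case: (occ_init p) => [[-> _]|[-> _]].
- move=> p; rewrite /marked /produced; split.
  + move=> h; split; last by case=> ? [[] _].
    left; case: (occ_init p) => [[-> _]//|[h0 _]]; by rewrite h0 in h.
  + by case=> [[->|[? [[] _]]] _].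
- by move=> t p [].
- by move=> t1 t2 p [].
Qed.

Lemma inv_step K C t K' : Inv K C -> @fires U K t K' ->
  Inv K' (fun t0 => C t0 \/ t0 = t).
Proof.
move=> I [en eK'].
have notC : ~ C t.
  move=> Ct; case: (occ_pre_ne t) => p hp.
  have : 0 < K p by apply: leq_trans hp (en p).
  by case/(inv_mk I) => _ []; exists t.
have postfresh : forall p, 0 < post U t p -> ~ produced C p.
  move=> p hp [h|[t0 [Ct0 h0]]].
    by case: (occ_init p) => [[_ h1]|[h1 _]]; [rewrite h1 in hp | rewrite h1 in h].
  by apply: notC; rewrite -(occ_prod h0 hp).
have prepost : forall p, 0 < post U t p -> pre U t p = 0.
  move=> p hp; case: (posnP (pre U t p)) => // hq.
  have : 0 < K p by apply: leq_trans hq (en p).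
  by case/(inv_mk I) => /(postfresh _ hp).
split.
- move=> p; rewrite eK'.
  case: (posnP (post U t p)) => hp.
    rewrite hp addn0; apply: leq_trans (leq_subr _ _) (inv_le1 I p).
  rewrite prepost // subn0.
  have -> : K p = 0.
    case: (posnP (K p)) => // h; by case: ((inv_mk I p).1 h) => /(postfresh _ hp).
  exact: occ_post1.
- move=> p; rewrite eK' /marked /produced.
  case: (posnP (post U t p)) => hp.
  + rewrite hp addn0; case: (posnP (pre U t p)) => hq.
    * rewrite hq subn0 (inv_mk I p) /marked /produced; split.
      - case=> [[h|[t0 [Ct0 h0]]] hn]; split.
        + by left.
        + by case=> t1 [[Ct1|->] h1]; [apply: hn; exists t1 | rewrite hq in h1].
        + by right; exists t0; split => //; left.
        + by case=> t1 [[Ct1|->] h1]; [apply: hn; exists t1 | rewrite hq in h1].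
      - case=> [[h|[t0 [[Ct0|->] h0]]] hn]; split.
        + by left.
        + by move=> [t1 [C1 h1]]; apply: hn; exists t1; split=> //; by left.
        + by right; exists t0.
        + by move=> [t1 [C1 h1]]; apply: hn; exists t1; split=> //; by left.
        + by rewrite hp in h0.
        + by move=> [t1 [C1 h1]]; apply: hn; exists t1; split=> //; by left.
    * have : 0 < K p by apply: leq_trans hq (en p).
      move=> hK; have -> : K p = 1 by apply/eqP; rewrite eqn_leq hK (inv_le1 I p).
      have -> : pre U t p = 1 by apply/eqP; rewrite eqn_leq hq occ_pre1.
      rewrite subnn; split; first by []. by case=> _ []; exists t; split => //; right.
  + rewrite prepost // subn0.
    have -> : K p = 0.
      case: (posnP (K p)) => // h; by case: ((inv_mk I p).1 h) => /(postfresh _ hp).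
    rewrite add0n hp; split => // _; split; first by right; exists t; split => //; right.
    case=> t1 [[Ct1|->] h1]; last by rewrite prepost in h1.
    by case: (postfresh _ hp); apply: (inv_cl I Ct1 h1).
- move=> t0 p [Ct0|e] hq; last subst t0.
  + case: (inv_cl I Ct0 hq) => [h|[t1 [Ct1 h1]]]; [by left | right; exists t1; split=> //; by left].
  + have : 0 < K p by apply: leq_trans hq (en p).
    case/(inv_mk I) => [[h|[t1 [Ct1 h1]]] _]; [by left | right; exists t1; split=> //; by left].
- move=> t1 t2 p [C1|e1] [C2|e2] h1 h2; subst.
  + exact: (inv_uc I C1 C2 h1 h2).
  + have : 0 < K p by apply: leq_trans h2 (en p).
    by case/(inv_mk I) => _ []; exists t1.
  + have : 0 < K p by apply: leq_trans h1 (en p).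
    by case/(inv_mk I) => _ []; exists t2.
  + by [].
Qed.

Lemma reach_inv K : reach U K -> exists C, Inv K C.
Proof.
elim=> [M eM | M t M' _ [C IC] f].
- exists (fun _ => False).
  have -> : M = init U by apply: functional_extensionality.
  exact: inv_init.
- by exists (fun t0 => C t0 \/ t0 = t); apply: inv_step f.
Qed.

Lemma reach_le1 K p : reach U K -> K p <= 1.
Proof. by case/reach_inv => C I; apply: inv_le1 I p. Qed.

Definition inC (C : tr U -> Prop) (n : node U) : Prop :=
  match n with inl p => produced C p | inr t => C t end.

Lemma cl_back K C a b : Inv K C -> causal_le a b -> inC C b -> inC C a.
Proof.
move=> I; elim=> {a b} [a b|a|a b c _ IH1 _ IH2]; last 2 first.
- by [].
- by move=> h; apply: IH1; apply: IH2.
case: a => [p|t]; case: b => [q|t'] //= hf.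
- by move=> Ct'; apply: (inv_cl I Ct' hf).
- case=> [h|[t0 [Ct0 h0]]].
    by case: (occ_init q) => [[_ h1]|[h1 _]]; [rewrite h1 in hf | rewrite h1 in h].
  by rewrite (occ_prod hf h0).
Qed.

Lemma reach_conc K x y : reach U K -> 0 < K x -> 0 < K y -> x <> y ->
  concurrent (inl x : node U) (inl y).
Proof.
case/reach_inv => C I hx hy nxy.
have key : forall a b, 0 < K a -> 0 < K b -> a <> b -> ~ causal_le (inl a : node U) (inl b).
  move=> a b ha hb nab /clos_rt_rt1n_iff h; inversion h as [|a0 z b0 hf hr]; subst; first by apply: nab.
  move: b0 hf; case: a0 => [q|t] //= hf hr.
  have : inC C (inr t) by apply: (cl_back I (clos_rt1n_rt _ _ _ _ hr)); case: ((inv_mk I b).1 hb).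
  by case: ((inv_mk I a).1 ha) => _ hn Ct; apply: hn; exists t.
split; [exact: key | split; [apply: key => // h; exact: nxy |]].
case=> p [t1 [t2 [_ [_ [n12 [h1 [h2 [c1 c2]]]]]]]].
have C1 : inC C (inr t1) by apply: (cl_back I c1); case: ((inv_mk I x).1 hx).
have C2 : inC C (inr t2) by apply: (cl_back I c2); case: ((inv_mk I y).1 hy).
exact: n12 (inv_uc I C1 C2 h1 h2).
Qed.

End Occ.
Section Main.
Variable G : pgame.
Variable U : net.
Variable lP : pl U -> gpl G.
Variable lT : tr U -> gtr G.
Hypothesis Hone : one_system_player G.
Hypothesis Hw : winning_da_strategy lP lT.

Notation PU := (ceq (pl U)).
Notation selP need l := (@sel PU (gpl G) lP need l).

Lemma HBP : branching_process lP lT. Proof. by case: Hw. Qed.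
Lemma HU : occurrence_net U. Proof. by case: HBP. Qed.
Lemma hom_pre t : img_ms lP (pre U t) (@gpre G (lT t)).
Proof. by case: HBP => _ [h _]; case: (h t). Qed.
Lemma hom_post t : img_ms lP (post U t) (@gpost G (lT t)).
Proof. by case: HBP => _ [h _]; case: (h t). Qed.
Lemma hom_init : img_ms lP (init U) (@ginit G).
Proof. by case: HBP => _ [_ []]. Qed.
Lemma JR : forall (S : seq (pl U)) (t : gtr G),
     List.NoDup S ->
     (forall x y, List.In x S -> List.In y S -> x <> y ->
        concurrent (inl x : node U) (inl y)) ->
     (forall p, gpre t p = \sum_(x <- S | lP x == p) 1) ->
     ~ (exists t' : tr U, lT t' = t /\
          forall x, (List.In x S -> pre U t' x = 1) /\
                    (~ List.In x S -> pre U t' x = 0)) ->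
     exists s, List.In s S /\ sysp G (lP s) /\
       ~ (exists t' : tr U, 0 < pre U t' s /\ lT t' = t).
Proof. by case: Hw => _ [h _]. Qed.
Lemma SAFE M : reach U M -> forall B : {ffun gpl G -> nat}, img_ms lP M B -> ~ gbad B.
Proof. by case: Hw => _ [_ [h _]]; apply: h. Qed.
Lemma DET (s : pl U) M : sysp G (lP s) -> reach U M -> 0 < M s ->
     forall t1 t2 : tr U, 0 < pre U t1 s -> 0 < pre U t2 s ->
       enabled t1 M -> enabled t2 M -> t1 = t2.
Proof. by case: Hw => _ [_ [_ [h _]]]; apply: h. Qed.
Lemma DLA M : reach U M -> forall LM : gpl G -> nat, img_ms lP M LM ->
     (exists t : gtr G, @enabled (under G) t LM) ->
     exists t' : tr U, enabled t' M.
Proof. by case: Hw => _ [_ [_ [_ h]]]; apply: h. Qed.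

Definition cK (K : pl U -> nat) : {set gtr G} :=
  [set t | pb (exists s t', 0 < K s /\ sysp G (lP s) /\ 0 < pre U t' s /\ lT t' = t)].

Lemma cKP K t : reflect (exists s t', 0 < K s /\ sysp G (lP s) /\ 0 < pre U t' s /\ lT t' = t)
  (t \in cK K).
Proof. rewrite inE; exact: pbP. Qed.

Lemma sys_unique K (M : gpl G -> nat) x y : reach U K -> img_ms lP K M -> reach (under G) M ->
  0 < K x -> 0 < K y -> sysp G (lP x) -> sysp G (lP y) -> x = y.
Proof.
move=> rK iM rM hx hy sx sy; apply: NNPP => nxy.
case: (img_list iM) => l [u c].
have := Hone rM; rewrite (img_sys _ iM u c) => e.
have := @sum_ge2 (pl U) l (fun z => sysp G (lP z)) K x y u (c x hx) (c y hy).
have hne : (x : PU) != y by apply/eqP.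
rewrite e => /(_ hne sx sy).
by move=> h; have := leq_trans (leq_add hx hy) h.
Qed.

Lemma sys_exists K (M : gpl G -> nat) : img_ms lP K M -> reach (under G) M ->
  exists s, 0 < K s /\ sysp G (lP s).
Proof.
move=> iM rM; have e := Hone rM.
have [p [sp hp]] : exists p, sysp G p /\ 0 < M p.
  apply: NNPP => hn; move: e; rewrite big1 // => p sp.
  by case: (posnP (M p)) => // h; case: hn; exists p.
case: (img_pos_inv iM hp) => x [ex hx]; exists x; split => //; by rewrite ex.
Qed.

Lemma supp_list K (M : gpl G -> nat) : img_ms lP K M ->
  exists l : seq PU, uniq l /\ forall x : PU, x \in l <-> 0 < K x.
Proof.
move=> iM; case: (img_list iM) => l [u c].
exists (filter (fun x : PU => 0 < K x) l); split; first exact: filter_uniq.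
move=> x; rewrite mem_filter; split; first by case/andP.
by move=> h; rewrite h c.
Qed.

Lemma count_supp K (M : gpl G -> nat) (l : seq PU) q : reach U K -> img_ms lP K M ->
  uniq l -> (forall x : PU, x \in l <-> 0 < K x) ->
  count (fun z : PU => lP z == q) l = M q.
Proof.
move=> rK iM u hl.
rewrite (img_any iM u); last by move=> x /hl.
rewrite -sum1_count big_seq_cond [in RHS]big_seq_cond; apply: eq_bigr => x /andP [/hl h _].
by apply/eqP; rewrite eqn_leq h (reach_le1 HU).
Qed.

Lemma sys_consume K t'' : enabled t'' K -> system_tr (lT t'') ->
  exists x, 0 < K x /\ sysp G (lP x) /\ 0 < pre U t'' x.
Proof.
move=> en st.
have [p [hp sp]] : exists p, 0 < gpre (lT t'') p /\ sysp G p.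
  apply: NNPP => hn; apply: st => p hp; apply/negP => sp; apply: hn; by exists p.
case: (img_pos_inv (hom_pre t'') hp) => x [ex hx]; exists x; split.
  exact: leq_trans hx (en x).
by rewrite ex.
Qed.

Lemma cK_system K t : t \in cK K -> system_tr t.
Proof.
case/cKP => s [t' [hs [ss [hp <-]]]] pe.
have := leq_trans hp (img_pos s (hom_pre t')).
by move/pe; rewrite ss.
Qed.

Lemma core K (M : gpl G -> nat) t (l : seq PU) :
  reach U K -> img_ms lP K M -> reach (under G) M -> @enabled (under G) t M ->
  (purely_env t \/ t \in cK K) -> uniq l -> (forall x : PU, x \in l <-> 0 < K x) ->
  exists t'', lT t'' = t /\
    forall x : PU, (x \in selP (gpre t) l -> pre U t'' x = 1) /\
                   (x \notin selP (gpre t) l -> pre U t'' x = 0).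
Proof.
move=> rK iM rM en hc u hl.
set S := selP (gpre t) l.
have sub : forall x : PU, x \in S -> x \in l by move=> x; apply: mem_subseq; exact: sel_subseq.
have uS : uniq S by apply: subseq_uniq (sel_subseq _ _ _) u.
have cnt : forall q, gpre t q = count (fun z : PU => lP z == q) S.
  move=> q; rewrite sel_count (count_supp q rK iM u hl).
  by apply/esym/minn_idPl; apply: en.
apply: NNPP => hn.
case: (@JR S t).
- by apply/NoDupE.
- move=> x y /InE /sub /hl hx /InE /sub /hl hy nxy; exact: (reach_conc HU rK hx hy nxy).
- by move=> p; rewrite sum1_count cnt.
- case=> t'' [et h]; apply: hn; exists t''; split => // x; split => hx.
  + by apply: (h x).1; apply/InE.
  + by apply: (h x).2 => /InE; apply/negP.
move=> s [/InE sS [ss hno]].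
have Ks : 0 < K s by apply/hl/sub.
case: hc => [pe|/cKP [s0 [t' [h0 [s0s [hp et]]]]]].
- have : 0 < gpre t (lP s).
    by rewrite cnt -has_count; apply/hasP; exists s.
  by move/pe; rewrite ss.
- have e := sys_unique rK iM rM Ks h0 ss s0s; subst s0.
  by apply: hno; exists t'.
Qed.

Lemma core_en K t'' (l : seq PU) need :
  (forall x : PU, x \in l <-> 0 < K x) ->
  (forall x : PU, (x \in selP need l -> pre U t'' x = 1) /\
                   (x \notin selP need l -> pre U t'' x = 0)) -> enabled t'' K.
Proof.
move=> hl h x; case: (boolP ((x : PU) \in selP need l)) => hx.
- rewrite (h x).1 //; apply/hl; move: hx; apply: mem_subseq; exact: sel_subseq.
- by rewrite (h x).2.
Qed.

Lemma fire_step K (M : gpl G -> nat) t (M' : gpl G -> nat) :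
  reach U K -> img_ms lP K M -> reach (under G) M ->
  (purely_env t \/ t \in cK K) -> @fires (under G) M t M' ->
  exists t'' K', lT t'' = t /\ @fires U K t'' K' /\ reach U K' /\ img_ms lP K' M' /\
     (forall x, K' x = K x - pre U t'' x + post U t'' x).
Proof.
move=> rK iM rM hc [en eM'].
case: (supp_list iM) => l [u hl].
case: (core rK iM rM en hc u hl) => t'' [et h].
have en'' := core_en hl h.
exists t'', (fun x => K x - pre U t'' x + post U t'' x); split => //.
have fi : @fires U K t'' (fun x => K x - pre U t'' x + post U t'' x) by split.
split => //; split; first by apply: reach_step rK fi.
split => //.
have := img_fire iM (hom_pre t'') (hom_post t'') en''.
by rewrite et => H; apply: (img_ext H) => // y; rewrite eM'.
Qed.

Definition Good (v : gvert G) (K : pl U -> nat) : Prop :=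
  reach U K /\ img_ms lP K (fun p => v.1 p) /\ reach (under G) (fun p => v.1 p) /\
  (forall c, v.2 = Some c -> c = cK K).

Lemma sub_cK K (M : gpl G -> nat) : img_ms lP K M -> sub_sM_post M (cK K).
Proof.
move=> iM t /cKP [s [t' [hs [ss [hp et]]]]]; exists (lP s); split => //; split.
  exact: leq_trans hs (img_pos s iM).
by rewrite -et; apply: leq_trans hp (img_pos s (hom_pre t')).
Qed.

Lemma good_V v K : Good v K -> graph_V0 v \/ graph_V1 v.
Proof.
case: v => M [c|] [rK [iM [rM hc]]] /=; last by left.
right; split => //; rewrite (hc c) //; exact: sub_cK iM.
Qed.

Lemma good_noX v K : Good v K -> ~ graph_X v.
Proof.
case: v => M [c|] [rK [iM [rM hc]]] //= [_ X].
have ec := hc c erefl; subst c.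
case: (supp_list iM) => l [u hl].
case: X => [bad|[[t1 [t2 [n12 [c1 [c2 [e1 e2]]]]]]|[[t [p [ct [et [hp hlt]]]]]|[ex [als nin]]]]].
- exact: (SAFE rK iM).
- case: (core rK iM rM e1 (or_intror c1) u hl) => t1' [et1 h1].
  case: (core rK iM rM e2 (or_intror c2) u hl) => t2' [et2 h2].
  have en1 := core_en hl h1; have en2 := core_en hl h2.
  have st_en1 : system_tr (lT t1') by rewrite et1; exact: cK_system c1.
  case: (sys_consume en1 st_en1) => x1 [k1 [s1 p1]].
  have st_en2 : system_tr (lT t2') by rewrite et2; exact: cK_system c2.
  case: (sys_consume en2 st_en2) => x2 [k2 [s2 p2]].
  have ex := sys_unique rK iM rM k1 k2 s1 s2; subst x2.
  apply: n12; rewrite -et1 -et2; congr lT; exact: (DET s1 rK k1 p1 p2 en1 en2).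
- case: (img_pos_inv iM (ltn_trans hp hlt)) => x [ex kx].
  have xl : (x : PU) \in l by apply/hl.
  set l1 : seq PU := (x : PU) :: rem (x : PU) l.
  set l2 : seq PU := rem (x : PU) l ++ [:: (x : PU)].
  have pl1 : perm_eq l l1 by apply: perm_to_rem.
  have pl2 : perm_eq l l2 by rewrite /l2 perm_sym perm_catC perm_sym; apply: perm_to_rem.
  have u1 : uniq l1 by rewrite -(perm_uniq pl1).
  have u2 : uniq l2 by rewrite -(perm_uniq pl2).
  have hl1 : forall y : PU, y \in l1 <-> 0 < K y by move=> y; rewrite -(perm_mem pl1).
  have hl2 : forall y : PU, y \in l2 <-> 0 < K y by move=> y; rewrite -(perm_mem pl2).
  case: (core rK iM rM et (or_intror ct) u1 hl1) => t1' [et1 h1].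
  case: (core rK iM rM et (or_intror ct) u2 hl2) => t2' [et2 h2].
  have en1 := core_en hl1 h1; have en2 := core_en hl2 h2.
  have st_en1 : system_tr (lT t1') by rewrite et1; exact: cK_system ct.
  case: (sys_consume en1 st_en1) => x1 [k1 [s1 p1]].
  have st_en2 : system_tr (lT t2') by rewrite et2; exact: cK_system ct.
  case: (sys_consume en2 st_en2) => x2 [k2 [s2 p2]].
  have ex2 := sys_unique rK iM rM k1 k2 s1 s2; subst x2.
  have e12 := DET s1 rK k1 p1 p2 en1 en2; subst t2'.
  have in1 : (x : PU) \in selP (gpre t) l1 by rewrite /l1 /= ex hp inE eqxx.
  have nin2 : (x : PU) \notin selP (gpre t) l2.
    rewrite /l2 sel_cat mem_cat negb_or; apply/andP; split.
      apply/negP => /(mem_subseq (sel_subseq _ _ _)); by rewrite mem_rem_uniqF.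
    have cr : count (fun z : PU => lP z == p) (rem (x : PU) l) = M p - 1.
      have := (permP pl1) (fun z : PU => lP z == p).
      rewrite (count_supp p rK iM u hl) /= ex eqxx add1n => ->; by rewrite subn1.
    have cnt : gpre t p <= count (fun z : PU => lP z == p) (rem (x : PU) l).
      by rewrite cr leq_subRL ?addn1 // (ltn_trans hp hlt).
    rewrite /= ex; case: ifP => // h; exfalso; move: h; rewrite subn_gt0 ltnNge.
    by move/negP; apply; exact: cnt.
  by have := (h1 x).1 in1; rewrite (h2 x).2.
- case: (DLA rK iM ex) => t' en'.
  have ent : @enabled (under G) (lT t') M.
    move=> q; apply: (img_le (hom_pre t') iM) => y; exact: en'.
  apply: (negP (nin _ ent)); apply/cKP.
  case: (sys_consume en' (als _ ent)) => x [kx [sx px]].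
  by exists x, t'.
Qed.

Lemma good_step v v' K : Good v K -> graph_E v v' -> (v.2 = None -> v'.2 = Some (cK K)) ->
  exists K', Good v' K'.
Proof.
case: v => M o; case: v' => M' o' [rK [iM [rM hc]]] /= E cond.
move: iM rM; rewrite /= => iM rM.
case: o hc E cond => [c|] hc; case: o' => [c'|] //=.
-
  move=> [_ [[rM' _] [ec' [t [pe fi]]]]] _; subst c'.
  case: (fire_step rK iM rM (or_introl pe) fi) => t'' [K' [et [fi' [rK' [iM' eK']]]]].
  exists K'; split => //; split => //; split => //.
  move=> c0 [<-]; rewrite (hc c erefl).
  have nopre : forall s, sysp G (lP s) -> pre U t'' s = 0.
    move=> s ss; case: (posnP (pre U t'' s)) => // hp.
    have := img_pos s (hom_pre t''); rewrite et => hh.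
    by have := pe _ (leq_trans hp hh); rewrite ss.
  apply/setP => t0; apply/cKP/cKP => [][s [t1 [hs [ss rest]]]]; exists s, t1; split => //.
  + by rewrite eK' nopre // subn0 (leq_trans hs (leq_addr _ _)).
  + case: (sys_exists iM rM) => s0 [h0 s0s].
    have h0' : 0 < K' s0 by rewrite eK' nopre // subn0 (leq_trans h0 (leq_addr _ _)).
    by rewrite (sys_unique rK' iM' rM' hs h0' ss s0s).
-
  move=> [_ [rM' [t [st [ct fi]]]]] _.
  have ct' : t \in cK K by rewrite -(hc c erefl).
  case: (fire_step rK iM rM (or_intror ct') fi) => t'' [K' [et [fi' [rK' [iM' eK']]]]].
  by exists K'.
-
  move=> [_ [eM _]] /(_ erefl) [ec]; subst.
  by exists K; split => //; split => //; split => // c0 [<-].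
Qed.

Definition Reach (v : gvert G) := exists K, Good v K.
Definition Kv (v : gvert G) : pl U -> nat := epsilon (inhabits (init U)) (Good v).
Definition cv (v : gvert G) : {set gtr G} := cK (Kv v).

Lemma Kv_good v : Reach v -> Good v (Kv v).
Proof. move=> h; exact: (epsilon_spec (inhabits (init U)) (Good v) h). Qed.

Fixpoint okp (v : gvert G) (l : seq (gvert G)) : Prop :=
  match l with
  | [::] => True
  | v' :: l' => graph_E v v' /\ (v.2 = None -> v'.2 = Some (cv v)) /\ okp v' l'
  end.

Lemma okp_rcons v l x : okp v (rcons l x) <->
  okp v l /\ graph_E (last v l) x /\ ((last v l).2 = None -> x.2 = Some (cv (last v l))).
Proof.
elim: l v => [|y l IH] v /=; first by split; [case=> a [b _] | case=> _ [a b]].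
rewrite IH; split; [case=> a [b [c [d e]]] | case=> [[a [b c]] [d e]]] => //.
Qed.

Lemma okp_epath v l : okp v l -> epath (@graph_E G) v l.
Proof. by elim: l v => [|y l IH] v //= [a [_ c]]; split => //; apply: IH. Qed.

Lemma Reach_step v v' : Reach v -> graph_E v v' -> (v.2 = None -> v'.2 = Some (cv v)) -> Reach v'.
Proof. move=> /Kv_good g e c; exact: (good_step g e c). Qed.

Lemma okp_reach v l : Reach v -> okp v l -> forall x, List.In x (v :: l) -> Reach x.
Proof.
elim: l v => [|y l IH] v hv /=; first by move=> _ x [<-|].
case=> e [c o] x [<-//|hx]; apply: (IH y) => //; exact: Reach_step hv e c.
Qed.

Lemma Reach_last v l : Reach v -> okp v l -> Reach (last v l).
Proof.
move=> hv o; apply: (okp_reach hv o).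
elim: l v {hv o} => [|y l IH] v /=; first by left.
by right; apply: IH.
Qed.

End Main.

Lemma InT (T : eqType) (x : T) (l : seq T) : x \in l -> List.In x l.
Proof. elim: l => [|y l IH] //=; rewrite in_cons => /orP [/eqP ->|/IH]; by [left|right]. Qed.

Lemma epath_nth (A : Type) (E : A -> A -> Prop) a l : epath E a l ->
  forall i, i < size l -> E (nth a (a :: l) i) (nth a l i).
Proof.
elim: l a => [|y l IH] a; first by move=> _ [].
move=> /= [e p] [|i] //= hi.
have hi' : i < size l by [].
rewrite (@set_nth_default _ (y :: l) y a i) ?(@set_nth_default _ l y a i) //; last exact: ltnW.
exact: IH.
Qed.

Theorem theorem1 (G : pgame) :
  is_petri_game G ->
  one_system_player G ->
  bounded (under G) ->
  has_winning_da_strategy G ->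
  player0_wins (Graph G).
Proof.
move=> _ Hone _ [U [lP [lT Hw]]].
pose gI : gvert G := ([ffun p => ginit p], None).
pose ok := @okp G U lP lT.
pose Rc := @Reach G U lP lT.
have RI : Rc gI.
  exists (init U); split; first exact: reach_init.
  split; first by apply: (img_ext (hom_init Hw)) => // y; rewrite /= ffunE.
  split => //; apply: reach_init => p; by rewrite /= ffunE.
have hlast : forall w v l, rcons w v = gI :: l -> v = last gI l.
  move=> w v l e; have : last gI (rcons w v) = last gI (gI :: l) by rewrite e.
  by rewrite last_rcons.
have Rl : forall l, ok gI l -> Rc (last gI l).
  move=> l o; exact: (Reach_last Hone Hw RI o).
have Rin : forall l x, ok gI l -> List.In x (gI :: l) -> Rc x.
  move=> l x o; exact: (okp_reach Hone Hw RI o).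
have V1None : forall v : gvert G, graph_V1 v -> v.2 <> None by case=> M [c|].
exists (fun w => exists l, w = gI :: l /\ ok gI l).
split; [split|split].
- by exists [::].
- split; first by move=> w [l [-> _]]; exists l.
  split.
    move=> w v [l [e o]]; case: w e => [//|a w'] /= [ea el] _; subst a l.
    by exists w'; split => //; move/okp_rcons: o => [].
  split.
    move=> w v [l [e o]]; rewrite (hlast _ _ _ e).
    case: (Rl _ o) => K g; exact: (good_V Hw g).
  split.
    move=> w v [l [e o]] hv v'; split.
      case=> l2 []; rewrite e /= => [[<-]] /okp_rcons [_ [E _]].
      by rewrite (hlast _ _ _ e).
    move=> E; exists (rcons l v'); rewrite e; split => //.
    apply/okp_rcons; split => //; rewrite -(hlast _ _ _ e); split => //.
    by move/(V1None _ hv).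
  split.
    move=> w v [l [e o]] hv _.
    have ev := hlast _ _ _ e.
    have Rv : Rc v by rewrite ev; exact: Rl.
    case: v e hv ev Rv => M [c|] //= e hv ev Rv.
    exists (M, Some (cv lP lT (M, None))); split.
      split => //; split => //.
      case: (Kv_good Rv) => _ [iM _]; exact: (sub_cK Hw iM).
    move=> v''; split.
      case=> l2 []; rewrite e /= => [[<-]] /okp_rcons [_ []]; rewrite -ev.
      case: v'' => M'' [c''|] //= [_ [eM _]] /(_ erefl) [->]; by rewrite eM.
    move=> ->; exists (rcons l (M, Some (cv lP lT (M, None)))); rewrite e; split => //.
    apply/okp_rcons; split => //; rewrite -ev; split => //.
    split => //; split => //.
    case: (Kv_good Rv) => _ [iM _]; exact: (sub_cK Hw iM).
  move=> w v [l [e o]] hv ne v' [l2 []]; rewrite e /= => [[<-]] /okp_rcons [_ [E _]].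
  by apply: (ne v'); rewrite (hlast _ _ _ e).
- move=> w [l [e o]] noext; split.
    exists l; split => //; split; first exact: okp_epath o.
    move=> v0 E0.
    case hv: (last gI l) => [M [c|]].
      apply: (noext v0); exists (rcons l v0); rewrite e; split => //.
      by apply/okp_rcons; split => //; split => //; rewrite hv.
    apply: (noext (M, Some (cv lP lT (M, None)))).
    exists (rcons l (M, Some (cv lP lT (M, None)))); rewrite e; split => //.
    apply/okp_rcons; split => //; rewrite hv; split => //.
    have Rv : Rc (M, None) by rewrite -hv; exact: Rl.
    have g := Kv_good Rv; split.
      by case: (good_V Hw g) => // h; case: (V1None _ h).
    split => //; case: g => _ [iM _]; exact: (sub_cK Hw iM).
  move=> v; rewrite e => /(Rin _ _ o) [K g]; exact: (good_noX Hone Hw g).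
- move=> f hS.
  have f0 : f 0 = gI by case: (hS 0) => l [[e _] _].
  split; first split => //.
    move=> n; case: (hS n.+1) => l [e o].
    have hsz : size l = n.+1 by have := congr1 size e; rewrite size_mkseq /= => [[<-]].
    have := epath_nth (okp_epath o) (i := n); rewrite hsz ltnSn => /(_ erefl).
    have e' : mkseq f n.+2 = gI :: l := e.
    have h1 : nth gI (gI :: l) n = f n by rewrite -e' nth_mkseq.
    have h2 : nth gI (gI :: l) n.+1 = f n.+1 by rewrite -e' nth_mkseq.
    by rewrite h1 -h2.
  move=> n; case: (hS n) => l [e o].
  have e' : mkseq f n.+1 = gI :: l := e.
  have : List.In (f n) (gI :: l).
    rewrite -e'; apply: InT; rewrite /mkseq; apply/mapP; exists n => //; by rewrite mem_iota add0n ltnSn.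
  move/(Rin _ _ o) => [K g]; exact: (good_noX Hone Hw g).
Qed.
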